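(* Let $\pi$ be a projective plane of order $q$ and let $n>1$ be a natural number. Then for any embedding $\phi$ of the complete bipartite graph $K_{q-n,\,n^2+n+1}$ into $\pi$, the image $\phi(W)$ of the vertex class $W$ of size $n^2+n+1$ is either the point set of a subplane of $\pi$ of order $n$, or a set of points lying on a single line.
   Context: A finite projective plane of order $q$ has $q^2+q+1$ points and lines, $q+1$ points on each line and $q+1$ lines through each point; any two distinct points lie on a unique line and any two lines meet in a unique point. An embedding of a simple graph $G=(V,E)$ into $\pi$ is an injective map $\phi$ from $V$ to the points of $\pi$ such that the induced map sending an edge $ab$ to the line through $\phi(a),\phi(b)$ is injective on $E$. A subplane of order $n$ of $\pi$ is a set of points and lines of $\pi$ which, with the inherited incidence, forms a projective plane of order $n$. *)

(* Defs.v *)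
From mathcomp Require Import all_boot.
Set Implicit Arguments. Unset Strict Implicit. Unset Printing Implicit Defensive.

Definition proj_plane_on (P L : finType) (I : P -> L -> bool)
    (Ps : {set P}) (Ls : {set L}) (n : nat) : Prop :=
  #|Ps| = n ^ 2 + n + 1 /\
      #|Ls| = n ^ 2 + n + 1 /\
      (forall l, l \in Ls -> #|[set p in Ps | I p l]| = n + 1) /\
      (forall p, p \in Ps -> #|[set l in Ls | I p l]| = n + 1) /\
      (forall p p', p \in Ps -> p' \in Ps -> p != p' ->
         exists! l, l \in Ls /\ I p l /\ I p' l) /\
      (forall l l', l \in Ls -> l' \in Ls -> l != l' ->
         exists! p, p \in Ps /\ I p l /\ I p l').

Definition projective_plane (P L : finType) (I : P -> L -> bool) (q : nat) :=
  proj_plane_on I [set: P] [set: L] q.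

Definition is_subplane_points (P L : finType) (I : P -> L -> bool)
    (S : {set P}) (n : nat) : Prop :=
  exists Ls : {set L}, proj_plane_on I S Ls n.

Definition collinear (P L : finType) (I : P -> L -> bool) (S : {set P}) : Prop :=
  exists l : L, forall p, p \in S -> I p l.

(* Complete bipartite graph K_{a,b}: vertices 'I_a + 'I_b, edges = pairs
   (u, w) in 'I_a * 'I_b (edge {inl u, inr w}).
   Embedding: injective on vertices, and the map edge |-> line through the
   images of its endpoints is injective.  Since two distinct points lie on a
   unique line, two edges are sent to the same line iff some line contains
   the images of all four endpoints. *)
Definition Kbip_embedding (P L : finType) (I : P -> L -> bool) (a b : nat)
    (phi : 'I_a + 'I_b -> P) : Prop :=
  injective phi /\
  forall (e e' : 'I_a * 'I_b) (l : L),
    I (phi (inl e.1)) l -> I (phi (inr e.2)) l ->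
    I (phi (inl e'.1)) l -> I (phi (inr e'.2)) l -> e = e'.

(* Main.v *)
Require Import Defs.
From mathcomp Require Import all_boot.
From mathcomp Require Import zify.
Set Implicit Arguments. Unset Strict Implicit. Unset Printing Implicit Defensive.

Lemma card_sum (T : finType) (A : {set T}) (p : pred T) :
  #|[set x in A | p x]| = \sum_(x in A) p x.
Proof.
rewrite -sum1_card [RHS]big_mkcond [LHS]big_mkcond /=; apply: eq_bigr => x _.
by rewrite inE; case: (x \in A); case: (p x).
Qed.

Definition ptsOn (P L : finType) (I : P -> L -> bool) (W : {set P}) (l : L) :
  {set P} := [set x in W | I x l].
Definition secs (P L : finType) (I : P -> L -> bool) (W : {set P}) : {set L} :=
  [set l | 1 < #|ptsOn I W l|].
Definition secw (P L : finType) (I : P -> L -> bool) (W : {set P}) (w : P) :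
  {set L} := [set l in secs I W | I w l].
Definition ln (P L : finType) (I : P -> L -> bool) (l0 : L) (p p' : P) : L :=
  odflt l0 [pick l | I p l && I p' l].

Lemma ln_spec (P L : finType) (I : P -> L -> bool) (l0 : L)
  (Hex : forall p p' : P, p != p' -> exists l, I p l && I p' l) p p' :
  p != p' -> I p (ln I l0 p p') && I p' (ln I l0 p p').
Proof.
move=> hpp; rewrite /ln; case: pickP => [l /= -> //|H].
by case: (Hex _ _ hpp) => l; rewrite H.
Qed.

Lemma ln_img (P L : finType) (I : P -> L -> bool) (l0 : L)
  (Hex : forall p p' : P, p != p' -> exists l, I p l && I p' l)
  (Huniq : forall (p p' : P) l l', p != p' -> I p l -> I p' l -> I p l' -> I p' l' -> l = l')
  (W : {set P}) (w : P) (l : L) :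
  w \in W -> ~~ I w l ->
  {in ptsOn I W l &, injective (ln I l0 w)} /\
  [set ln I l0 w x | x in ptsOn I W l] \subset secw I W w.
Proof.
move=> wW nwl; split.
  move=> x y; rewrite !inE => /andP[xW xl] /andP[yW yl] e.
  apply/eqP; apply/negPn/negP => nxy.
  have wx : w != x by apply/eqP => ewx; rewrite ewx xl in nwl.
  have wy : w != y by apply/eqP => ewy; rewrite ewy yl in nwl.
  move: (ln_spec l0 Hex wx) (ln_spec l0 Hex wy); rewrite e => /andP[h1 h2] /andP[h3 h4].
  have := Huniq _ _ _ _ nxy h2 h4 xl yl => eq; by rewrite -eq h1 in nwl.
apply/subsetP => m /imsetP[x]; rewrite inE => /andP[xW xl] ->.
have wx : w != x by apply/eqP => ewx; rewrite ewx xl in nwl.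
move: (ln_spec l0 Hex wx) => /andP[h1 h2].
rewrite !inE h1 andbT; apply/card_gt1P; exists w, x; by rewrite !inE wW xW h1 h2.
Qed.

Lemma sum_secw (P L : finType) (I : P -> L -> bool) (l0 : L)
  (Hex : forall p p' : P, p != p' -> exists l, I p l && I p' l)
  (Huniq : forall (p p' : P) l l', p != p' -> I p l -> I p' l -> I p l' -> I p' l' -> l = l')
  (W : {set P}) (w : P) :
  w \in W ->
  \sum_(l in secw I W w) #|ptsOn I W l :\ w| = #|W :\ w|.
Proof.
move=> wW.
have e1 : forall l, #|ptsOn I W l :\ w| = \sum_(x in W :\ w) I x l.
  move=> l; rewrite -card_sum; apply: eq_card => x; by rewrite /ptsOn !inE andbA.
rewrite (eq_bigr (fun l => \sum_(x in W :\ w) I x l)); last by move=> l _; exact: e1.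
rewrite exchange_big /= -sum1_card.
apply: eq_bigr => x; rewrite !inE => /andP[xw xW].
have wx : w != x by rewrite eq_sym.
rewrite -card_sum.
suff -> : [set l in secw I W w | I x l] = [set ln I l0 w x] by rewrite cards1.
apply/setP => m; rewrite !inE; move: (ln_spec l0 Hex wx) => /andP[h1 h2].
apply/idP/idP.
  move=> /andP[/andP[_ wm] xm]; apply/eqP; exact: (Huniq _ _ _ _ wx wm xm h1 h2).
move/eqP => ->; rewrite h1 h2 !andbT; apply/card_gt1P; exists w, x.
by rewrite !inE wW xW h1 h2.
Qed.

Lemma secw_eq (P L : finType) (I : P -> L -> bool) (l0 : L)
  (Hex : forall p p' : P, p != p' -> exists l, I p l && I p' l)
  (Huniq : forall (p p' : P) l l', p != p' -> I p l -> I p' l -> I p l' -> I p' l' -> l = l')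
  (W : {set P}) (n : nat) (hn : 0 < n)
  (hW : #|W| = n ^ 2 + n + 1)
  (hK : forall w, w \in W -> #|secw I W w| <= n + 1)
  (hnc : forall l, exists2 w, w \in W & ~~ I w l)
  (w : P) : w \in W ->
  #|secw I W w| = n + 1 /\ forall l, l \in secw I W w -> #|ptsOn I W l| = n + 1.
Proof.
move=> wW.
have hl : forall l, #|ptsOn I W l| <= n + 1.
  move=> l; case: (hnc l) => w' w'W nw'l.
  apply: leq_trans (hK _ w'W).
  case: (ln_img l0 Hex Huniq w'W nw'l) => hinj hsub.
  rewrite -(card_in_imset hinj); exact: subset_leq_card.
set F := fun l => #|ptsOn I W l :\ w|.
have hF : forall l, l \in secw I W w -> F l + 1 = #|ptsOn I W l|.
  move=> l; rewrite !inE => /andP[_ wl].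
  by rewrite /F (cardsD1 w (ptsOn I W l)) /ptsOn inE wW wl addnC.
have hFn : forall l, l \in secw I W w -> F l <= n.
  move=> l ls; have := hF l ls; have := hl l; lia.
have hsum : \sum_(l in secw I W w) F l = n ^ 2 + n.
  rewrite /F (sum_secw l0 Hex Huniq wW).
  have := cardsD1 w W; rewrite wW hW; lia.
have hsplit : \sum_(l in secw I W w) (n - F l) + \sum_(l in secw I W w) F l
              = #|secw I W w| * n.
  rewrite -big_split -sum_nat_const /=; apply: eq_bigr => l ls; rewrite subnK //.
  exact: hFn.
have hKw := hK w wW.
have hcard : #|secw I W w| = n + 1 by nia.
have h0 : \sum_(l in secw I W w) (n - F l) == 0 by apply/eqP; nia.
move: h0; rewrite sum_nat_eq0 => /forallP h0.
split => // l ls; rewrite -(hF l ls).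
have := h0 l; rewrite ls /= => /eqP; have := hFn l ls; lia.
Qed.

Lemma subplane_of (P L : finType) (I : P -> L -> bool) (l0 : L)
  (Hex : forall p p' : P, p != p' -> exists l, I p l && I p' l)
  (Huniq : forall (p p' : P) l l', p != p' -> I p l -> I p' l -> I p l' -> I p' l' -> l = l')
  (Hmeet : forall l l' : L, l != l' -> exists p, I p l && I p l')
  (W : {set P}) (n : nat) (hn : 0 < n)
  (hW : #|W| = n ^ 2 + n + 1)
  (hK : forall w, w \in W -> #|secw I W w| <= n + 1)
  (hnc : forall l, exists2 w, w \in W & ~~ I w l) :
  proj_plane_on I W (secs I W) n.
Proof.
have E := secw_eq l0 Hex Huniq hn hW hK hnc.
have hline : forall l, l \in secs I W -> #|ptsOn I W l| = n + 1.
  move=> l ls; have := ls; rewrite inE => /card_gt1P[x [y [xl _ _]]].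
  move: xl; rewrite /ptsOn inE => /andP[xW xl].
  apply: (proj2 (E x xW)); by rewrite inE ls xl.
split; first exact: hW.
split.
  have : \sum_(w in W) #|secw I W w| = \sum_(l in secs I W) #|ptsOn I W l|.
    rewrite (eq_bigr (fun w => \sum_(l in secs I W) I w l)); last first.
      by move=> w _; rewrite /secw card_sum.
    rewrite exchange_big /=; apply: eq_bigr => l _; by rewrite /ptsOn card_sum.
  rewrite (eq_bigr (fun _ => n + 1)); last by move=> w wW; case: (E w wW).
  rewrite [in RHS](eq_bigr (fun _ => n + 1)); last by move=> l ls; exact: hline.
  rewrite !sum_nat_const hW => h; nia.
split; first exact: hline.
split; first by move=> p pW; case: (E p pW).
split.
  move=> p p' pW p'W pp'; case: (Hex _ _ pp') => l /andP[pl p'l].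
  exists l; split.
    split; last by [].
    rewrite inE; apply/card_gt1P; exists p, p'; by rewrite !inE pW p'W pl p'l.
  move=> l' [_ [pl' p'l']]; exact: (Huniq _ _ _ _ pp' pl p'l pl' p'l').
move=> l l' ls l's ll'.
case: (Hmeet _ _ ll') => p /andP[pl pl'].
have uniqp : forall p', I p' l -> I p' l' -> p' = p.
  move=> p' p'l p'l'; apply/eqP; apply/negPn/negP => np.
  by move: ll'; rewrite (Huniq _ _ _ _ np p'l pl p'l' pl') eqxx.
exists p; split; last by move=> p' [_ [h1 h2]]; rewrite (uniqp p' h1 h2).
split => //.
have [w [wW wl nwl']] : exists w, [/\ w \in W, I w l & ~~ I w l'].
  move: ls; rewrite inE => /card_gt1P[x [y [xl yl xy]]].
  move: xl yl; rewrite /ptsOn !inE => /andP[xW xl] /andP[yW yl].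
  case xl': (I x l'); last by exists x; rewrite xl'.
  case yl': (I y l'); last by exists y; rewrite yl'.
  by move: ll'; rewrite (Huniq _ _ _ _ xy xl yl xl' yl') eqxx.
case: (ln_img l0 Hex Huniq wW nwl') => hinj hsub.
have hc : #|[set ln I l0 w x | x in ptsOn I W l']| = #|secw I W w|.
  by rewrite (card_in_imset hinj) (hline _ l's); case: (E w wW).
have := subset_cardP hc hsub => /(_ l).
rewrite inE ls wl => /imsetP[x]; rewrite /ptsOn inE => /andP[xW xl'] el.
have wx : w != x by apply/eqP => ewx; rewrite ewx xl' in nwl'.
move: (ln_spec l0 Hex wx) => /andP[_ xl]; rewrite -el in xl.
by rewrite -(uniqp x xl xl').
Qed.

Theorem theorem4p4 (P L : finType) (I : P -> L -> bool) (q n : nat)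
    (hpi : projective_plane I q) (hn : 1 < n)
    (phi : 'I_(q - n) + 'I_(n ^ 2 + n + 1) -> P)
    (hphi : Kbip_embedding I phi) :
  let W := [set phi (inr w) | w : 'I_(n ^ 2 + n + 1)] in
  is_subplane_points I W n \/ collinear I W.
Proof.
move=> W.
case: hpi => hP [hL [hlq [hpq [hpp hll]]]].
case: hphi => phinj hedge.
have [l0 _] : exists l0 : L, l0 \in [set: L].
  apply/card_gt0P; rewrite hL; lia.
have Hex : forall p p' : P, p != p' -> exists l, I p l && I p' l.
  move=> p p' pp'; case: (hpp p p' (in_setT _) (in_setT _) pp') => l [[_ [h1 h2]] _].
  by exists l; rewrite h1 h2.
have Huniq : forall (p p' : P) l l', p != p' -> I p l -> I p' l -> I p l' -> I p' l' -> l = l'.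
  move=> p p' l l' pp' h1 h2 h3 h4.
  case: (hpp p p' (in_setT _) (in_setT _) pp') => m [_ hm].
  by rewrite -(hm l (conj (in_setT _) (conj h1 h2))) -(hm l' (conj (in_setT _) (conj h3 h4))).
have Hmeet : forall l l' : L, l != l' -> exists p, I p l && I p l'.
  move=> l l' ll'; case: (hll l l' (in_setT _) (in_setT _) ll') => p [[_ [h1 h2]] _].
  by exists p; rewrite h1 h2.
have hW : #|W| = n ^ 2 + n + 1.
  rewrite card_imset ?card_ord //.
  by move=> a b /phinj [].
case: (boolP [exists l, [forall x in W, I x l]]) => [/existsP[l /forallP hl]|hnc].
  right; exists l => p pW; by have := hl p; rewrite pW.
have hnc' : forall l, exists2 w, w \in W & ~~ I w l.
  move=> l; move: hnc; rewrite negb_exists => /forallP /(_ l).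
  rewrite negb_forall => /existsP[x]; rewrite negb_imply => /andP[xW nxl].
  by exists x.
left; exists (secs I W).
apply: (subplane_of l0 Hex Huniq Hmeet (ltnW hn) hW _ hnc').
move=> w /imsetP[b _ ->].
set T := [set ln I l0 (phi (inl a)) (phi (inr b)) | a : 'I_(q - n)].
have neq : forall a, phi (inl a) != phi (inr b).
  by move=> a; apply/eqP => /phinj.
have hT : #|T| = q - n.
  rewrite card_imset ?card_ord // => a a' e.
  move: (ln_spec l0 Hex (neq a)) (ln_spec l0 Hex (neq a')); rewrite e.
  move=> /andP[h1 h2] /andP[h3 h4].
  by have := hedge (a, b) (a', b) _ h1 h2 h3 h4 => -[].
have hsubT : T \subset [set l | I (phi (inr b)) l].
  apply/subsetP => l /imsetP[a _ ->]; rewrite inE.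
  by case/andP: (ln_spec l0 Hex (neq a)).
have hsubS : secw I W (phi (inr b)) \subset [set l | I (phi (inr b)) l].
  by apply/subsetP => l; rewrite !inE => /andP[].
have hdis : T :&: secw I W (phi (inr b)) = set0.
  apply/setP => l; rewrite !inE; apply/negbTE/negP => /andP[/imsetP[a _ ->]].
  case/andP: (ln_spec l0 Hex (neq a)) => h1 h2.
  rewrite ?inE h2 andbT => /card_gt1P[x [y [xl yl xy]]].
  move: xl yl xy; rewrite /ptsOn !inE => /andP[/imsetP[bx _ ->] hx] /andP[/imsetP[by' _ ->] hy] xy.
  have hx' := hedge (a, b) (a, bx) _ h1 h2 h1 hx.
  have hy' := hedge (a, b) (a, by') _ h1 h2 h1 hy.
  case: hx' => ebx; case: hy' => eby; by move: xy; rewrite -ebx -eby eqxx.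
have hpw : #|[set l | I (phi (inr b)) l]| = q + 1.
  rewrite -(hpq (phi (inr b)) (in_setT _)); apply: eq_card => l; by rewrite !inE.
have hU : T :|: secw I W (phi (inr b)) \subset [set l | I (phi (inr b)) l].
  by rewrite subUset hsubT hsubS.
have := subset_leq_card hU.
rewrite cardsU hdis cards0 subn0 hT hpw.
move: (#|secw I W (phi (inr b))|) => s; clear; lia.
Qed.
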